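(* Let $\lvert\psi\rangle\in(\mathbb{C}^d)^{\otimes n}$ be a unit vector with recursive Schmidt decomposition $\lvert\psi\rangle=\sum_{i=1}^{d^{n-1}}\sqrt{p_i}\,\lvert\phi_i\rangle$, where $p_i\ge0$, $\sum_ip_i=1$, and $\{\lvert\phi_i\rangle\}_{i=1}^{d^{n-1}}$ is a set of orthonormal product vectors in $(\mathbb{C}^d)^{\otimes n}$. Define $\rho:=\sum_{i=1}^{d^{n-1}}p_i\lvert\phi_i\rangle\langle\phi_i\rvert$. Then for every projector $\Pi$ acting on some subset $\mathcal{S}\subseteq\{1,\ldots,n\}$ of qudits with $|\mathcal{S}|=k$ (i.e. a projector on the qudits in $\mathcal{S}$ tensored with the identity on the rest), $\mathrm{Tr}(\Pi\rho)\ge\frac{1}{d^{k-1}}\mathrm{Tr}(\Pi\lvert\psi\rangle\langle\psi\rvert)$.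
   Context: Recursive Schmidt decomposition (RSD) of $\lvert\psi\rangle\in(\mathbb{C}^d)^{\otimes n}$ (with respect to the fixed qudit order $1,\ldots,n$): first write the Schmidt decomposition of $\lvert\psi\rangle$ across qudit $1$ versus qudits $2,\ldots,n$, $\lvert\psi\rangle=\sum_{i=1}^d\alpha_i\lvert w_i\rangle\lvert v_i\rangle$ (with $\alpha_i\ge 0$ and orthonormal $\{\lvert w_i\rangle\}$, $\{\lvert v_i\rangle\}$); then recursively replace each $\lvert v_i\rangle\in(\mathbb{C}^d)^{\otimes n-1}$ by its own Schmidt decomposition across its first qudit (qudit $2$) versus the remaining qudits, and so on, through qudit $n-1$. Expanding gives an expression $\lvert\psi\rangle=\sum_{i=1}^{d^{n-1}}\sqrt{p_i}\lvert\phi_i\rangle$ with each $\lvert\phi_i\rangle$ a tensor product of single-qudit vectors and $\sqrt{p_i}$ the product of the corresponding Schmidt coefficients. *)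

(* Defs.v *)
From HB Require Import structures.
From mathcomp Require Import all_boot all_order all_algebra.
Set Implicit Arguments. Unset Strict Implicit. Unset Printing Implicit Defensive.
Import Order.TTheory GRing.Theory Num.Theory.
Local Open Scope ring_scope.

Section Defs.
Variable C : numClosedFieldType.

Definition dotv (I : finType) (u v : I -> C) : C := \sum_(i : I) (u i)^* * v i.

Definition orthonormal (I J : finType) (f : I -> J -> C) : Prop :=
  forall i j, dotv (f i) (f j) = (i == j)%:R.

Variable d : nat.

(* A vector of (C^d)^{\otimes n}: a function of the n qudit labels. *)
Definition qvec (n : nat) := n.-tuple 'I_d -> C.

(* |w> \otimes |v> with |w> in C^d (first qudit) and |v> on the remaining n *)
Definition tens1 (n : nat) (w : 'I_d -> C) (v : qvec n) : qvec n.+1 :=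
  fun x => w (thead x) * v (behead_tuple x).

(* is_RSD m psi p phi : for psi on m.+1 qudits, the family
   (sqrt (p t), phi t), t ranging over m.-tuples (i_1,...,i_m) in [d]^m
   (so d^{n-1} terms, n = m.+1), is obtained from a recursive Schmidt
   decomposition of psi w.r.t. the qudit order 1..n:
   psi = sum_i alpha_i |w_i>|v_i>  (alpha_i >= 0, {w_i}, {v_i} orthonormal),
   each v_i recursively decomposed, and
   p (i::t) = alpha_i^2 * p_i t,  phi (i::t) = w_i (x) phi_i t. *)
Fixpoint is_RSD (m : nat) : qvec m.+1 -> (m.-tuple 'I_d -> C) ->
    (m.-tuple 'I_d -> qvec m.+1) -> Prop :=
  match m return qvec m.+1 -> (m.-tuple 'I_d -> C) ->
                 (m.-tuple 'I_d -> qvec m.+1) -> Prop with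
  | 0 => fun psi p phi => forall t, p t = 1 /\ phi t = psi
  | m'.+1 => fun psi p phi =>
      exists (alpha : 'I_d -> C) (w : 'I_d -> 'I_d -> C) (v : 'I_d -> qvec m'.+1),
        [/\ forall i, 0 <= alpha i,
            orthonormal w,
            orthonormal v,
            forall x, psi x = \sum_(i < d) alpha i * tens1 (w i) (v i) x &
            forall i, exists (p' : m'.-tuple 'I_d -> C)
                             (phi' : m'.-tuple 'I_d -> qvec m'.+1),
              is_RSD (v i) p' phi' /\
              forall t, p (@cons_tuple m' _ i t) = alpha i ^+ 2 * p' t /\
                        phi (@cons_tuple m' _ i t) = tens1 (w i) (phi' t)]
  end.

(* Operators on (C^d)^{\otimes n} as kernels A x y = <x|A|y>. *)
Definition trace_prod (n : nat) (A B : n.-tuple 'I_d -> n.-tuple 'I_d -> C) : C :=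
  \sum_(x : n.-tuple 'I_d) \sum_(y : n.-tuple 'I_d) A x y * B y x.

Definition proj_vec (n : nat) (psi : qvec n) : n.-tuple 'I_d -> n.-tuple 'I_d -> C :=
  fun x y => psi x * (psi y)^*.

Definition mix (n : nat) (I : finType) (p : I -> C) (phi : I -> qvec n) :=
  fun x y => \sum_(t : I) p t * (phi t x * (phi t y)^*).

Definition subconf (n : nat) (S : {set 'I_n}) :=
  {ffun {i : 'I_n | i \in S} -> 'I_d}.

Definition restr (n : nat) (S : {set 'I_n}) (x : n.-tuple 'I_d) : subconf S :=
  [ffun i => tnth x (val i)].

Definition is_projector (I : finType) (P : I -> I -> C) : Prop :=
  (forall a b, P a b = (P b a)^*) /\
  (forall a b, \sum_(c : I) P a c * P c b = P a b).

(* P on the qudits in S, tensored with the identity on the other qudits *)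
Definition lift_op (n : nat) (S : {set 'I_n}) (P : subconf S -> subconf S -> C) :
    n.-tuple 'I_d -> n.-tuple 'I_d -> C :=
  fun x y => P (restr S x) (restr S y) *
             [forall i : 'I_n, (i \notin S) ==> (tnth x i == tnth y i)]%:R.

End Defs.

(* Main.v *)
Require Import Defs.
From HB Require Import structures.
From mathcomp Require Import all_boot all_order all_algebra.
From mathcomp Require Import ring.
Set Implicit Arguments. Unset Strict Implicit. Unset Printing Implicit Defensive.
Import Order.TTheory GRing.Theory Num.Theory.
Local Open Scope ring_scope.

Section Aux.
Variable C : numClosedFieldType.
Variable d : nat.

Notation tup n := (n.-tuple 'I_d).
Definition kern n := tup n -> tup n -> C.

Definition form n (A : kern n) (u v : tup n -> C) : C :=
  \sum_x \sum_y (u x)^* * A x y * v y.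

Lemma sum_tuple_cons n (F : tup n.+1 -> C) :
  \sum_x F x = \sum_(a : 'I_d) \sum_(t : tup n) F (cons_tuple a t).
Proof.
rewrite pair_bigA /=.
rewrite (reindex (fun p : 'I_d * tup n => [tuple of p.1 :: p.2])) //=.
exists (fun x : tup n.+1 => (thead x, [tuple of behead x])) => [[a t] _|x _] /=.
  by congr (_, _); apply: val_inj.
by rewrite [in RHS](tuple_eta x).
Qed.

Lemma form_ext n (A : kern n) u u' v v' :
  (forall x, u x = u' x) -> (forall x, v x = v' x) -> form A u v = form A u' v'.
Proof.
move=> hu hv; apply: eq_bigr => x _; apply: eq_bigr => y _.
by rewrite hu hv.
Qed.

Lemma form_suml n (A : kern n) (I : finType) (u : I -> tup n -> C) v :
  form A (fun x => \sum_i u i x) v = \sum_i form A (u i) v.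
Proof.
rewrite /form [RHS]exchange_big; apply: eq_bigr => x _.
rewrite [RHS]exchange_big; apply: eq_bigr => y _.
by rewrite rmorph_sum /= !mulr_suml.
Qed.

Lemma form_sumr n (A : kern n) (I : finType) u (v : I -> tup n -> C) :
  form A u (fun y => \sum_i v i y) = \sum_i form A u (v i).
Proof.
rewrite /form [RHS]exchange_big; apply: eq_bigr => x _.
rewrite [RHS]exchange_big; apply: eq_bigr => y _.
by rewrite !mulr_sumr.
Qed.

Lemma form_scalel n (A : kern n) c u v :
  form A (fun x => c * u x) v = c^* * form A u v.
Proof.
rewrite /form mulr_sumr; apply: eq_bigr => x _; rewrite mulr_sumr.
by apply: eq_bigr => y _; rewrite rmorphM /= !mulrA.
Qed.

Lemma form_scaler n (A : kern n) c u v :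
  form A u (fun x => c * v x) = c * form A u v.
Proof.
rewrite /form mulr_sumr; apply: eq_bigr => x _; rewrite mulr_sumr.
by apply: eq_bigr => y _; ring.
Qed.

Lemma form_lin n (A : kern n) (I J : finType) (c : I -> C) (e : J -> C) u v :
  form A (fun x => \sum_i c i * u i x) (fun y => \sum_j e j * v j y) =
  \sum_i \sum_j (c i)^* * e j * form A (u i) (v j).
Proof.
rewrite form_suml; apply: eq_bigr => i _.
rewrite form_scalel form_sumr mulr_sumr; apply: eq_bigr => j _.
by rewrite form_scaler mulrA.
Qed.


Lemma behead_cons n a (t : tup n) : behead_tuple (cons_tuple a t) = t.
Proof. exact: val_inj. Qed.

Lemma tens1_cons n (w : 'I_d -> C) (f : qvec C d n) a (t : tup n) :
  tens1 w f (cons_tuple a t) = w a * f t.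
Proof. by rewrite /tens1 behead_cons. Qed.

Definition Ablk n (A : kern n.+1) a b : kern n :=
  fun x y => A (cons_tuple a x) (cons_tuple b y).

Lemma form_cons n (A : kern n.+1) u v :
  form A u v = \sum_a \sum_b form (Ablk A a b) (fun x => u (cons_tuple a x))
     (fun y => v (cons_tuple b y)).
Proof.
rewrite /form sum_tuple_cons; apply: eq_bigr => a _.
under eq_bigr => x _ do rewrite sum_tuple_cons.
rewrite exchange_big; apply: eq_bigr => b _.
by rewrite exchange_big.
Qed.

Lemma tens_form n (A : kern n.+1) w (f : qvec C d n) w' (g : qvec C d n) :
  form A (tens1 w f) (tens1 w' g) =
  \sum_a \sum_b (w a)^* * w' b * form (Ablk A a b) f g.
Proof.
rewrite form_cons; apply: eq_bigr => a _; apply: eq_bigr => b _.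
rewrite (form_ext _ (u' := fun x => w a * f x) (v' := fun y => w' b * g y));
  try by move=> x; rewrite tens1_cons.
by rewrite form_scalel form_scaler mulrA.
Qed.


Definition psd n (A : kern n) := forall u, 0 <= form A u u.

Lemma form_addl n (A : kern n) u v w :
  form A (fun x => u x + v x) w = form A u w + form A v w.
Proof.
rewrite /form -big_split; apply: eq_bigr => x _.
rewrite -big_split; apply: eq_bigr => y _.
by rewrite rmorphD /=; ring.
Qed.

Lemma form_addr n (A : kern n) u v w :
  form A w (fun x => u x + v x) = form A w u + form A w v.
Proof.
rewrite /form -big_split; apply: eq_bigr => x _.
rewrite -big_split; apply: eq_bigr => y _.
by rewrite mulrDr.
Qed.

Lemma form_sub n (A : kern n) u v :
  form A (fun x => u x - v x) (fun x => u x - v x) =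
  form A u u - form A u v - form A v u + form A v v.
Proof.
rewrite (form_ext _ (u' := fun x => u x + (-1) * v x)
          (v' := fun x => u x + (-1) * v x)); try by move=> x; rewrite mulN1r.
rewrite !form_addl !form_addr !form_scalel !form_scaler.
rewrite rmorphN rmorph1; ring.
Qed.

Lemma cs n (A : kern n) (I : finType) (y : I -> tup n -> C) : psd A ->
  form A (fun x => \sum_i y i x) (fun x => \sum_i y i x) <=
  #|I|%:R * \sum_i form A (y i) (y i).
Proof.
move=> hA.
have h0 : 0 <= \sum_i \sum_j form A (fun x => y i x - y j x) (fun x => y i x - y j x).
  by apply: sumr_ge0 => i _; apply: sumr_ge0 => j _; apply: hA.
rewrite form_suml.
under eq_bigr => i _ do rewrite form_sumr.
set F := \sum_i \sum_j _ in h0 *.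
set G := \sum_i \sum_j _.
set Q := \sum_i _.
have eF : F = (#|I|%:R * Q - G) *+ 2.
  rewrite /F.
  have hs : forall a b c e : C, a - b - c + e = (a + e) - (b + c)
     by move=> *; ring.
  under eq_bigr => i _ do under eq_bigr => j _ do rewrite form_sub hs.
  under eq_bigr => i _ do rewrite sumrB !big_split /=.
  rewrite sumrB !big_split /=.
  have e1 : \sum_(i : I) \sum_(j : I) form A (y i) (y i) = #|I|%:R * Q.
    rewrite /Q mulr_sumr; apply: eq_bigr => i _.
    by rewrite sumr_const mulr_natl.
  have e2 : \sum_(i : I) \sum_(j : I) form A (y j) (y j) = #|I|%:R * Q.
    by rewrite exchange_big.
  have e3 : \sum_(i : I) \sum_(j : I) form A (y j) (y i) = G.
    by rewrite exchange_big.
  rewrite e1 e2 e3 /G; ring.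
rewrite -subr_ge0.
by move: h0; rewrite eF pmulrn_lge0.
Qed.


Definition agoff n (S : {set 'I_n}) (x y : tup n) : bool :=
  [forall i, (i \notin S) ==> (tnth x i == tnth y i)].
Definition agon n (S : {set 'I_n}) (x x' : tup n) : Prop :=
  forall i, i \in S -> tnth x i = tnth x' i.
Definition loc n (S : {set 'I_n}) (A : kern n) :=
  (forall x y, ~~ agoff S x y -> A x y = 0) /\
  (forall x y x' y', agon S x x' -> agon S y y' -> agoff S x y ->
     agoff S x' y' -> A x y = A x' y').

Definition Ssh n (S : {set 'I_n.+1}) : {set 'I_n} := [set j | lift ord0 j \in S].

Lemma tnth_cons0 n a (t : tup n) : tnth (cons_tuple a t) ord0 = a.
Proof. by []. Qed.

Lemma tnth_consS n a (t : tup n) j : tnth (cons_tuple a t) (lift ord0 j) = tnth t j.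
Proof. exact: tnthS. Qed.

Lemma agoff_cons n (S : {set 'I_n.+1}) a b (x y : tup n) :
  agoff S (cons_tuple a x) (cons_tuple b y) =
  ((ord0 \in S) || (a == b)) && agoff (Ssh S) x y.
Proof.
apply/forallP/andP => [H | [H1 /forallP H2] i].
  split; first by have := H ord0; rewrite !tnth_cons0; case: (ord0 \in S).
  apply/forallP => j; have := H (lift ord0 j); rewrite !tnth_consS inE //.
case: (unliftP ord0 i) => [j ->|->].
  by rewrite !tnth_consS; have := H2 j; rewrite inE.
by rewrite !tnth_cons0; case: (ord0 \in S) H1.
Qed.

Lemma agon_cons n (S : {set 'I_n.+1}) a b (x y : tup n) :
  (ord0 \in S -> a = b) -> agon (Ssh S) x y ->
  agon S (cons_tuple a x) (cons_tuple b y).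
Proof.
move=> h1 h2 i; case: (unliftP ord0 i) => [j ->|->].
  by rewrite !tnth_consS => hj; apply: h2; rewrite inE.
by rewrite !tnth_cons0 => /h1.
Qed.

Lemma card_Ssh n (S : {set 'I_n.+1}) : #|S| = ((ord0 \in S) + #|Ssh S|)%N.
Proof.
rewrite -!sum1_card big_mkcond big_ord_recl /=.
congr addn.
by rewrite [RHS]big_mkcond; apply: eq_bigr => j _; rewrite inE.
Qed.

Lemma form_kext n (A B : kern n) u v :
  (forall x y, A x y = B x y) -> form A u v = form B u v.
Proof.
by move=> h; apply: eq_bigr => x _; apply: eq_bigr => y _; rewrite h.
Qed.

Lemma form_kscale n (B : kern n) c u v :
  form (fun x y => c * B x y) u v = c * form B u v.
Proof.
rewrite /form mulr_sumr; apply: eq_bigr => x _; rewrite mulr_sumr.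
by apply: eq_bigr => y _; ring.
Qed.

Lemma form_ksum n (I : finType) (B : I -> kern n) (c : I -> C) u v :
  form (fun x y => \sum_i c i * B i x y) u v = \sum_i c i * form (B i) u v.
Proof.
rewrite /form.
under [RHS]eq_bigr => i _ do rewrite mulr_sumr.
rewrite [RHS]exchange_big; apply: eq_bigr => x _.
under [RHS]eq_bigr => i _ do rewrite mulr_sumr.
rewrite [RHS]exchange_big; apply: eq_bigr => y _.
rewrite mulr_sumr mulr_suml; apply: eq_bigr => i _; ring.
Qed.


Lemma sum_delta (I : finType) (i0 : I) (F : I -> C) :
  \sum_i (i0 == i)%:R * F i = F i0.
Proof.
rewrite (bigD1 i0) //= eqxx mul1r big1 ?addr0 // => i hi.
by rewrite eq_sym (negbTE hi) mul0r.
Qed.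

Lemma caseA_blk n (S : {set 'I_n.+1}) (A : kern n.+1) a0 :
  loc S A -> ord0 \notin S -> forall a b x y,
  A (cons_tuple a x) (cons_tuple b y) = (a == b)%:R * Ablk A a0 a0 x y.
Proof.
move=> [h1 h2] h0 a b x y; rewrite /Ablk.
case: (eqVneq a b) => [<-|nab].
  rewrite mul1r; case hxy: (agoff (Ssh S) x y).
    have ag : forall z, agon S (cons_tuple a z) (cons_tuple a0 z).
      by move=> z; apply: agon_cons => [h|//]; rewrite h in h0.
    by apply: h2; rewrite ?ag // agoff_cons hxy eqxx orbT.
  by rewrite !h1 // agoff_cons hxy andbF.
by rewrite mul0r h1 // agoff_cons (negbTE h0) (negbTE nab).
Qed.

Lemma caseA_loc n (S : {set 'I_n.+1}) (A : kern n.+1) a0 :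
  loc S A -> loc (Ssh S) (Ablk A a0 a0).
Proof.
move=> [h1 h2]; split => [x y hn|x y x' y' hx hy hxy hx'y'].
  by apply: h1; rewrite agoff_cons (negbTE hn) andbF.
by apply: h2; try apply: agon_cons => //; rewrite agoff_cons eqxx orbT.
Qed.

Definition Aw n (A : kern n.+1) (w : 'I_d -> C) : kern n :=
  fun x y => \sum_a \sum_b ((w a)^* * w b) * A (cons_tuple a x) (cons_tuple b y).

Lemma form_Aw n (A : kern n.+1) w (f g : qvec C d n) :
  form (Aw A w) f g = form A (tens1 w f) (tens1 w g).
Proof.
rewrite tens_form pair_bigA /=.
rewrite (form_kext (B := fun x y => \sum_(p : 'I_d * 'I_d)
   ((w p.1)^* * w p.2) * Ablk A p.1 p.2 x y)); last first.
  by move=> x y; rewrite /Aw pair_bigA.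
by rewrite form_ksum.
Qed.

Lemma psd_Aw n (A : kern n.+1) w : psd A -> psd (Aw A w).
Proof. by move=> hA u; rewrite form_Aw. Qed.

Lemma loc_Aw n (S : {set 'I_n.+1}) (A : kern n.+1) w :
  loc S A -> ord0 \in S -> loc (Ssh S) (Aw A w).
Proof.
move=> [h1 h2] h0; split => [x y hn|x y x' y' hx hy hxy hx'y'].
  rewrite /Aw big1 // => a _; rewrite big1 // => b _.
  by rewrite h1 ?mulr0 // agoff_cons (negbTE hn) andbF.
rewrite /Aw; apply: eq_bigr => a _; apply: eq_bigr => b _; congr (_ * _).
by apply: h2; try apply: agon_cons => //; rewrite agoff_cons h0.
Qed.

Lemma caseC_blk n (S : {set 'I_n.+1}) (A : kern n.+1) (x0 : tup n) :
  loc S A -> ord0 \in S -> Ssh S = set0 -> forall a b x y,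
  A (cons_tuple a x) (cons_tuple b y) =
  (x == y)%:R * A (cons_tuple a x0) (cons_tuple b x0).
Proof.
move=> [h1 h2] h0 hS a b x y.
have agS : forall z z', agon (Ssh S) z z' by move=> z z' i; rewrite hS in_set0.
have aoS : forall z, agoff (Ssh S) z z by move=> z; apply/forallP => i; rewrite eqxx implybT.
case: (eqVneq x y) => [<-|nxy].
  rewrite mul1r; apply: h2; try (apply: agon_cons => //);
  by rewrite agoff_cons h0 aoS.
rewrite mul0r h1 // agoff_cons h0 /=; apply/negP => /forallP H.
apply: (negP nxy); apply/eqP; apply: eq_from_tnth => i; have := H i.
by rewrite hS in_set0 /= => /eqP.
Qed.

Definition Id n : kern n := fun x y => (x == y)%:R.

Lemma form_Id n (u v : tup n -> C) : form (@Id n) u v = dotv u v.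
Proof.
apply: eq_bigr => x _; rewrite (bigD1 x) //= /Id eqxx mulr1 big1 ?addr0 //.
by move=> y hy; rewrite eq_sym (negbTE hy) mulr0 mul0r.
Qed.

Lemma Id_blk n a b (x y : tup n) :
  Id (cons_tuple a x) (cons_tuple b y) = (a == b)%:R * Id x y.
Proof.
rewrite /Id -val_eqE /= eqseq_cons val_eqE.
by case: (a == b); rewrite ?mul1r ?mul0r.
Qed.

Lemma tensA_form n (A : kern n.+1) (A0 : kern n) :
  (forall a b x y, A (cons_tuple a x) (cons_tuple b y) = (a == b)%:R * A0 x y) ->
  forall w w' (f g : qvec C d n),
  form A (tens1 w f) (tens1 w' g) = dotv w w' * form A0 f g.
Proof.
move=> hA w w' f g; rewrite tens_form /dotv mulr_suml; apply: eq_bigr => a _.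
under eq_bigr => b _ do rewrite (form_kext f g (hA a b)) form_kscale mulrCA.
by rewrite (sum_delta a (fun b => (w a)^* * w' b * form A0 f g)).
Qed.


Lemma sum_tuple0 (F : tup 0 -> C) : \sum_t F t = F [tuple].
Proof.
rewrite (eq_bigr (fun _ => F [tuple])) => [|t _]; last by rewrite tuple0.
by rewrite sumr_const card_tuple expn0.
Qed.

Lemma conj_ge0 (x : C) : 0 <= x -> x^* = x.
Proof. by move=> h; rewrite conj_Creal // ger0_real. Qed.

Lemma rsd_trace m : forall (psi : qvec C d m.+1) p phi, is_RSD psi p phi ->
  \sum_t p t * form (@Id m.+1) (phi t) (phi t) = form (@Id m.+1) psi psi.
Proof.
elim: m => [|m IH] psi p phi /=.
  by move=> H; rewrite sum_tuple0; have [-> ->] := H [tuple]; rewrite mul1r.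
move=> [alpha [w [v [ha hw hv hpsi hrec]]]].
rewrite (form_ext _ hpsi hpsi) form_lin sum_tuple_cons.
apply: eq_bigr => i _.
under [RHS]eq_bigr => j _ do rewrite (tensA_form (@Id_blk _)) hw form_Id hv.
rewrite [RHS](bigD1 i) //= eqxx !mulr1 [X in _ + X]big1 ?addr0; last first.
  by move=> j hj; rewrite eq_sym (negbTE hj) mul0r mulr0.
have [p' [phi' [hr ht]]] := hrec i.
under eq_bigr => t _ do rewrite (proj1 (ht t)) (proj2 (ht t)) (tensA_form (@Id_blk _)) hw eqxx mul1r -mulrA.
by rewrite -mulr_sumr (IH _ _ _ hr) form_Id hv eqxx mulr1 conj_ge0 // expr2.
Qed.


Lemma psd_blk0 n (A : kern n.+1) a0 : psd A -> psd (Ablk A a0 a0).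
Proof.
move=> hA u; have := psd_Aw (fun a => (a0 == a)%:R) hA u.
rewrite (form_kext u u (B := Ablk A a0 a0)) // => x y.
rewrite /Aw; under eq_bigr => a _ do under eq_bigr => b _ do
  rewrite rmorph_nat -mulrA.
under eq_bigr => a _ do rewrite -mulr_sumr sum_delta.
by rewrite sum_delta.
Qed.

Lemma tensC_form n (A : kern n.+1) (B : 'I_d -> 'I_d -> C) :
  (forall a b x y, A (cons_tuple a x) (cons_tuple b y) = B a b * Id x y) ->
  forall w w' (f g : qvec C d n),
  form A (tens1 w f) (tens1 w' g) =
  (\sum_a \sum_b (w a)^* * w' b * B a b) * form (@Id n) f g.
Proof.
move=> hA w w' f g; rewrite tens_form mulr_suml; apply: eq_bigr => a _.
rewrite mulr_suml; apply: eq_bigr => b _.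
by rewrite (form_kext f g (hA a b)) form_kscale mulrA.
Qed.

Definition IHP m := forall (psi : qvec C d m.+1) p phi (S : {set 'I_m.+1})
  (A : kern m.+1), is_RSD psi p phi -> loc S A -> psd A -> (0 < #|S|)%N ->
  form A psi psi <= d%:R ^+ #|S|.-1 * \sum_t p t * form A (phi t) (phi t).

Lemma stepA m (IH : IHP m) (psi : qvec C d m.+2) p phi (S : {set 'I_m.+2})
  (A : kern m.+2) (alpha : 'I_d -> C) (w : 'I_d -> 'I_d -> C)
  (v : 'I_d -> qvec C d m.+1) (a0 : 'I_d) :
  (forall i, 0 <= alpha i) -> Defs.orthonormal w -> Defs.orthonormal v ->
  (forall x, psi x = \sum_(i < d) alpha i * tens1 (w i) (v i) x) ->
  (forall i, exists (p' : tup m -> C) (phi' : tup m -> qvec C d m.+1),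
     is_RSD (v i) p' phi' /\ forall t, p (cons_tuple i t) = alpha i ^+ 2 * p' t /\
        phi (cons_tuple i t) = tens1 (w i) (phi' t)) ->
  ord0 \notin S -> loc S A -> psd A -> (0 < #|S|)%N ->
  form A psi psi <= d%:R ^+ #|S|.-1 * \sum_t p t * form A (phi t) (phi t).
Proof.
move=> ha hw hv hpsi hrec h0 hl hA hS.
have hb := caseA_blk a0 hl h0.
have hk : #|S| = #|Ssh S| by rewrite card_Ssh (negbTE h0).
rewrite (form_ext _ hpsi hpsi) form_lin sum_tuple_cons mulr_sumr.
apply: ler_sum => i _.
under eq_bigr => j _ do rewrite (tensA_form hb) hw.
rewrite (bigD1 i) //= eqxx mul1r [X in _ + X]big1 ?addr0; last first.
  by move=> j hj; rewrite eq_sym (negbTE hj) mul0r mulr0.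
have [p' [phi' [hr ht]]] := hrec i.
under eq_bigr => t _ do rewrite (proj1 (ht t)) (proj2 (ht t)) (tensA_form hb) hw
  eqxx mul1r -mulrA.
rewrite -mulr_sumr mulrCA conj_ge0 // -expr2.
apply: ler_wpM2l; first exact: exprn_ge0.
rewrite hk; apply: IH hr (caseA_loc a0 hl) (psd_blk0 a0 hA) _.
by rewrite -hk.
Qed.


Lemma stepB m (IH : IHP m) (psi : qvec C d m.+2) p phi (S : {set 'I_m.+2})
  (A : kern m.+2) (alpha : 'I_d -> C) (w : 'I_d -> 'I_d -> C)
  (v : 'I_d -> qvec C d m.+1) :
  (forall i, 0 <= alpha i) -> Defs.orthonormal w -> Defs.orthonormal v ->
  (forall x, psi x = \sum_(i < d) alpha i * tens1 (w i) (v i) x) ->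
  (forall i, exists (p' : tup m -> C) (phi' : tup m -> qvec C d m.+1),
     is_RSD (v i) p' phi' /\ forall t, p (cons_tuple i t) = alpha i ^+ 2 * p' t /\
        phi (cons_tuple i t) = tens1 (w i) (phi' t)) ->
  ord0 \in S -> (0 < #|Ssh S|)%N -> loc S A -> psd A ->
  form A psi psi <= d%:R ^+ #|S|.-1 * \sum_t p t * form A (phi t) (phi t).
Proof.
move=> ha hw hv hpsi hrec h0 hS hl hA.
have hk : #|S|.-1 = (#|Ssh S|.-1).+1 by rewrite card_Ssh h0 /= ?add1n prednK.
rewrite (form_ext _ hpsi hpsi).
apply: le_trans (cs _ hA) _.
rewrite card_ord sum_tuple_cons hk exprS -mulrA.
apply: ler_wpM2l; first exact: ler0n.
rewrite mulr_sumr; apply: ler_sum => i _.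
rewrite form_scalel form_scaler -form_Aw mulrA conj_ge0 // -expr2.
have [p' [phi' [hr ht]]] := hrec i.
under eq_bigr => t _ do rewrite (proj1 (ht t)) (proj2 (ht t)) -form_Aw -mulrA.
rewrite -mulr_sumr mulrCA.
apply: ler_wpM2l; first exact: exprn_ge0.
exact: IH hr (loc_Aw _ hl h0) (psd_Aw _ hA) hS.
Qed.

Lemma stepC m (psi : qvec C d m.+2) p phi (S : {set 'I_m.+2}) (x0 : tup m.+1)
  (A : kern m.+2) (alpha : 'I_d -> C) (w : 'I_d -> 'I_d -> C)
  (v : 'I_d -> qvec C d m.+1) :
  (forall i, 0 <= alpha i) -> Defs.orthonormal w -> Defs.orthonormal v ->
  (forall x, psi x = \sum_(i < d) alpha i * tens1 (w i) (v i) x) ->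
  (forall i, exists (p' : tup m -> C) (phi' : tup m -> qvec C d m.+1),
     is_RSD (v i) p' phi' /\ forall t, p (cons_tuple i t) = alpha i ^+ 2 * p' t /\
        phi (cons_tuple i t) = tens1 (w i) (phi' t)) ->
  ord0 \in S -> Ssh S = set0 -> loc S A ->
  form A psi psi <= d%:R ^+ #|S|.-1 * \sum_t p t * form A (phi t) (phi t).
Proof.
move=> ha hw hv hpsi hrec h0 hS hl.
have hb0 := caseC_blk x0 hl h0 hS.
pose B a b := A (cons_tuple a x0) (cons_tuple b x0).
have hb : forall a b x y, A (cons_tuple a x) (cons_tuple b y) = B a b * Id x y.
  by move=> a b x y; rewrite hb0 mulrC.
have hk : #|S|.-1 = 0%N by rewrite card_Ssh h0 hS cards0.
rewrite hk expr0 mul1r le_eqVlt; apply/orP; left; apply/eqP.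
rewrite (form_ext _ hpsi hpsi) form_lin sum_tuple_cons.
apply: eq_bigr => i _.
under eq_bigr => j _ do rewrite (tensC_form hb) form_Id hv.
rewrite [LHS](bigD1 i) //= eqxx mulr1 [X in _ + X]big1 ?addr0; last first.
  by move=> j hj; rewrite eq_sym (negbTE hj) mulr0 mulr0.
have [p' [phi' [hr ht]]] := hrec i.
set beta := \sum_a \sum_b _.
have E : forall t, p (cons_tuple i t) * form A (phi (cons_tuple i t)) (phi (cons_tuple i t))
   = (alpha i ^+ 2 * beta) * (p' t * form (@Id m.+1) (phi' t) (phi' t)).
  by move=> t; rewrite (proj1 (ht t)) (proj2 (ht t)) (tensC_form hb) -/beta; ring.
rewrite [RHS](eq_bigr _ (fun t _ => E t)) -mulr_sumr (rsd_trace hr) form_Id hv eqxx.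
by rewrite mulr1 conj_ge0 // expr2; ring.
Qed.


Lemma main (d0 : (0 < d)%N) m : IHP m.
Proof.
elim: m => [|m IH] psi p phi S A /=.
  move=> H hl hA hS; rewrite sum_tuple0; have [-> ->] := H [tuple].
  rewrite mul1r; apply: ler_peMl; first exact: hA.
  by apply: exprn_ege1; rewrite ler1n.
move=> [alpha [w [v [ha hw hv hpsi hrec]]]] hl hA hS.
case h0: (ord0 \in S).
  case hk: #|Ssh S| => [|k].
    apply: (@stepC m psi p phi S [tuple of nseq m.+1 (Ordinal d0)] A alpha w v ha hw hv hpsi hrec) => //.
    by apply/eqP; rewrite -cards_eq0 hk.
  by apply: (stepB IH ha hw hv hpsi hrec) => //; rewrite hk.
by apply: (@stepA m IH psi p phi S A alpha w v (Ordinal d0) ha hw hv hpsi hrec) => //; rewrite h0.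
Qed.

Section Lift.
Variables (n : nat) (S : {set 'I_n}).

Definition mk (x : tup n) (c : subconf d S) : tup n :=
  [tuple (if insub i is Some s then c s else tnth x i) | i < n].

Lemma mk_spec x c z : (restr S z == c) && agoff S x z = (mk x c == z).
Proof.
apply/andP/eqP => [[/eqP hr ha]|<-].
  apply: eq_from_tnth => i; rewrite tnth_mktuple.
  case: insubP => [s hi hv|hi].
    by rewrite -hr ffunE hv.
  by have := forallP ha i; rewrite hi => /eqP.
split.
  apply/eqP/ffunP => s; rewrite ffunE tnth_mktuple valK //.
apply/forallP => i; apply/implyP => hi; rewrite tnth_mktuple.
by rewrite insubN.
Qed.

Lemma sum_fiber x (G : subconf d S -> C) :
  \sum_z (agoff S x z)%:R * G (restr S z) = \sum_c G c.
Proof.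
rewrite (eq_bigr (fun z => \sum_c (restr S z == c)%:R * ((agoff S x z)%:R * G c)));
  last by move=> z _; rewrite (sum_delta (restr S z) (fun c => (agoff S x z)%:R * G c)).
rewrite exchange_big; apply: eq_bigr => c _.
rewrite (eq_bigr (fun z => (mk x c == z)%:R * G c)) ?sum_delta // => z _.
by rewrite mulrA -natrM mulnb mk_spec.
Qed.

Lemma agoff_sym x y : agoff S x y = agoff S y x.
Proof.
by apply/forallP/forallP => H i; have := H i; rewrite eq_sym.
Qed.

Lemma agoff_trans x y z : agoff S x y -> agoff S y z -> agoff S x z.
Proof.
move=> /forallP h1 /forallP h2; apply/forallP => i; apply/implyP => hi.
by have := h1 i; have := h2 i; rewrite hi /= => /eqP -> /eqP ->.
Qed.

Variable P : subconf d S -> subconf d S -> C.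
Hypothesis hP : is_projector P.

Lemma lift_loc : loc S (lift_op P).
Proof.
split=> [x y hn|x y x' y' hx hy hxy hx'y']; rewrite /lift_op.
  by rewrite -/(agoff S x y) (negbTE hn) mulr0.
rewrite -/(agoff S x y) -/(agoff S x' y') hxy hx'y'.
have -> : restr S x = restr S x' by apply/ffunP => s; rewrite !ffunE hx // (valP s).
have -> : restr S y = restr S y' by apply/ffunP => s; rewrite !ffunE hy // (valP s).
by [].
Qed.

Lemma lift_herm x y : lift_op P y x = (lift_op P x y)^*.
Proof.
rewrite /lift_op -/(agoff S x y) -/(agoff S y x) rmorphM rmorph_nat agoff_sym.
by rewrite (proj1 hP).
Qed.

Lemma lift_idem x y : \sum_z lift_op P x z * lift_op P z y = lift_op P x y.
Proof.
rewrite /lift_op -/(agoff S x y).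
under eq_bigr => z _ do rewrite -/(agoff S x z) -/(agoff S z y).
case hxy: (agoff S x y).
  rewrite mulr1 -(proj2 hP) -(sum_fiber x (fun c => P (restr S x) c * P c (restr S y))).
  apply: eq_bigr => z _.
  case hxz: (agoff S x z).
    by rewrite (agoff_trans (y := x) _ hxy) ?mulr1 ?mul1r // agoff_sym.
  case hzy: (agoff S z y); last by rewrite !mulr0 mul0r.
  by rewrite (agoff_trans hxy) // in hxz; rewrite agoff_sym.
rewrite mulr0 big1 // => z _.
case hxz: (agoff S x z); case hzy: (agoff S z y); rewrite ?mulr0 ?mul0r //.
by rewrite (agoff_trans hxz hzy) in hxy.
Qed.

Lemma lift_psd : psd (lift_op P).
Proof.
move=> u; rewrite /form.
under eq_bigr => x _ do under eq_bigr => y _ do rewrite -lift_idem mulr_sumr mulr_suml.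
under eq_bigr => x _ do rewrite exchange_big.
rewrite exchange_big; apply: sumr_ge0 => z _.
rewrite (eq_bigr (fun x => ((u x)^* * lift_op P x z) *
                            \sum_y lift_op P z y * u y)); last first.
  by move=> x _; rewrite mulr_sumr; apply: eq_bigr => y _; ring.
rewrite -mulr_suml.
have -> : \sum_x (u x)^* * lift_op P x z = (\sum_y lift_op P z y * u y)^*.
  rewrite rmorph_sum; apply: eq_bigr => x _.
  by rewrite rmorphM lift_herm mulrC.
by rewrite mulrC mul_conjC_ge0.
Qed.

End Lift.

End Aux.

Unset Implicit Arguments.
Set Strict Implicit.

Theorem theorem4 (C : numClosedFieldType) (d m : nat)
    (psi : qvec C d m.+1) (p : m.-tuple 'I_d -> C)
    (phi : m.-tuple 'I_d -> qvec C d m.+1)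
    (S : {set 'I_m.+1}) (P : subconf d S -> subconf d S -> C) :
  dotv psi psi = 1 ->
  is_RSD psi p phi ->
  (0 < #|S|)%N ->
  is_projector P ->
  (d%:R ^+ (#|S|.-1))^-1 * trace_prod (lift_op P) (proj_vec psi)
    <= trace_prod (lift_op P) (mix p phi).
Proof.
move=> _ hR hS hP.
have eL : trace_prod (lift_op P) (proj_vec psi) = form (lift_op P) psi psi.
  rewrite /trace_prod /form; apply: eq_bigr => x _; apply: eq_bigr => y _.
  rewrite /proj_vec; ring.
have eR : trace_prod (lift_op P) (mix p phi) =
    \sum_t p t * form (lift_op P) (phi t) (phi t).
  rewrite /trace_prod /form /mix; symmetry.
  under eq_bigr => t _ do rewrite mulr_sumr.
  rewrite exchange_big; apply: eq_bigr => x _.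
  under eq_bigr => t _ do rewrite mulr_sumr.
  rewrite exchange_big; apply: eq_bigr => y _.
  rewrite mulr_sumr; apply: eq_bigr => t _; ring.
rewrite eL eR.
case: (posnP d) => [d0|dpos].
  subst d.
  have f0 : forall (A : kern C 0 m.+1) u v, form A u v = 0.
    by move=> A u v; rewrite /form big1 // => x; case: (tnth x ord0).
  rewrite f0 mulr0 big1 // => t _; by rewrite f0 mulr0.
have := @main C d dpos m psi p phi S (lift_op P) hR (@lift_loc C d m.+1 S P) (@lift_psd C d m.+1 S P hP) hS.
by rewrite ler_pdivrMl // exprn_gt0 // ltr0n.
Qed.
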